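(* Consider the following two-bidder auction. A single good has common value $v$ with CDF $F_v$, density $f_v$, support $\mathbb{R}_+$ and finite mean, and $\mathbb{E}[v]>L\ge 0$. Alice submits a bid knowing only $F_v$; then $v$ is realized and Bob, observing $v$ but not Alice's bid, submits a bid. The highest bid wins and pays its bid (payoff $v$ minus bid) unless it is strictly below the limit price $L$, in which case the good is unsold. If the bids tie, Bob wins; if Bob's bid equals $L$ he can win; a winning bid of Alice equal exactly to $L$ results in no sale. Suppose, in an equilibrium, Bob's bid as a function of $v$ is given by a non-decreasing function $\beta_L$, and let $\beta_L^{-1}(b)=\inf\{v:\beta_L(v)\ge b\}$ be its pseudo-inverse. Then every bid $b_A>L$ of Alice (in the support of her equilibrium strategy) satisfies $$b_A=\mathbb{E}\left[v\mid v<\beta_L^{-1}(b_A)\right].$$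
   Context: Bidders are risk neutral; equilibrium means perfect Bayesian Nash equilibrium. *)

(* Defs.v *)
From HB Require Import structures.
From mathcomp Require Import all_boot all_order all_algebra.
From mathcomp Require Import all_classical all_reals all_analysis.
Set Implicit Arguments. Unset Strict Implicit. Unset Printing Implicit Defensive.
Import Order.TTheory GRing.Theory Num.Theory.
Import numFieldNormedType.Exports.
Local Open Scope classical_set_scope.
Local Open Scope ring_scope.

Section Auction.
Variable R : realType.
Local Notation leb := (@lebesgue_measure R).

Definition Pv (f : R -> R) (A : set R) : \bar R :=
  (\int[leb]_(x in A) (f x)%:E)%E.

Definition Ev (f : R -> R) (A : set R) : \bar R :=
  (\int[leb]_(x in A) (x * f x)%:E)%E.

Definition cond_mean (f : R -> R) (A : set R) : R :=
  fine (Ev f A) / fine (Pv f A).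

Definition value_density (f : R -> R) : Prop :=
  [/\ measurable_fun setT f,
      (forall x, 0 <= f x),
      Pv f setT = 1%E &
      Pv f [set` `]-oo, 0[] = 0%E] /\
  (forall a b, 0 <= a -> a < b -> (0 < Pv f [set` `]a, b[%R])%E) /\
  leb.-integrable setT (fun x => (x * f x)%:E).

(* Pseudo-inverse beta^{-1}(b) = inf { v in R_+ : beta v >= b } (+oo if empty). *)
Definition bid_pinv (beta : R -> R) (b : R) : \bar R :=
  ereal_inf [set x%:E | x in [set v | 0 <= v /\ b <= beta v]].

(* Alice's expected payoff from bid a when Bob bids beta(v):
   she wins iff a > L and beta(v) < a (ties go to Bob; a = L means no sale). *)
Definition alice_payoff (f : R -> R) (L : R) (beta : R -> R) (a : R) : \bar R :=
  if L < a then
    (\int[leb]_(x in [set v | (0 <= v)%R /\ (beta v < a)%R]) ((x - a) * f x)%:E)%E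
  else 0%E.

(* Bob's expected payoff with value v and bid b against Alice's mixed strategy
   muA: he wins iff b >= L and Alice's bid is <= b. *)
Definition bob_payoff (muA : probability R R) (L : R) (v b : R) : R :=
  if L <= b then (v - b) * fine (muA [set` `]-oo, b]]) else 0.

Definition in_support (muA : probability R R) (a : R) : Prop :=
  forall e : R, 0 < e -> (0 < muA [set` `]a - e, a + e[%R])%E.

Definition equilibrium (f : R -> R) (L : R) (muA : probability R R)
    (beta : R -> R) : Prop :=
  (forall v, 0 <= v -> forall b, bob_payoff muA L v b <= bob_payoff muA L v (beta v))
  /\ (forall a, in_support muA a ->
        forall a', (alice_payoff f L beta a' <= alice_payoff f L beta a)%E).

End Auction.

(* Main.v *)
Require Import Defs.
From HB Require Import structures.
From mathcomp Require Import all_boot all_order all_algebra.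
From mathcomp Require Import all_classical all_reals all_analysis.
From mathcomp Require Import lra measurable_realfun.
Import Order.TTheory GRing.Theory Num.Theory.
Import numFieldNormedType.Exports.
Local Open Scope classical_set_scope.
Local Open Scope ring_scope.
Lemma null_of_not_support (R : realType) (muA : probability R R) (A : set R) :
  measurable A -> (forall x, A x -> ~ in_support muA x) -> muA A = 0%E.
Proof.
move=> mA hA.
pose F (k : nat) : set R := if @unpickle (rat * rat)%type k is Some (p, q) then
   (if muA [set` `]ratr p, ratr q[] == 0%E then [set` `]ratr p, ratr q[] else set0) else set0.
have negF : forall k, muA.-negligible (F k).
  move=> k; rewrite /F; case: unpickle => [[p q]|]; last exact: negligible_set0.
  case: eqP => h; last exact: negligible_set0.
  by exists [set` `]ratr p, ratr q[]; split.
have [N [mN N0 sub]] := negligible_bigcup negF.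
suff AN : A `<=` N.
  apply/eqP; rewrite eq_le measure_ge0 andbT -N0.
  by apply: le_measure => //; rewrite inE.
move=> x Ax; apply: sub.
have := hA x Ax; rewrite /in_support => /existsNP[e /not_implyP[e0 /negP]].
rewrite -leNgt => me.
have me0 : muA [set` `]x - e, x + e[] = 0%E by apply/eqP; rewrite eq_le me measure_ge0.
have h1 : x - e < x by rewrite ltrBlDr ltrDl.
have h2 : x < x + e by rewrite ltrDl.
have [p /[!in_itv]/= /andP[p1 p2]] := rat_in_itvoo h1.
have [q /[!in_itv]/= /andP[q1 q2]] := rat_in_itvoo h2.
exists (pickle (p, q)); first by [].
rewrite /F pickleK.
have -> : muA [set` `]ratr p, ratr q[] = 0%E.
  apply/eqP; rewrite eq_le measure_ge0 andbT -me0.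
  apply: le_measure; rewrite ?inE //.
  move=> y /=; rewrite !in_itv/= => /andP[y1 y2].
  by rewrite (lt_trans p1 y1) (lt_trans y2 q2).
by rewrite eqxx /= in_itv/= p2 q1.
Qed.

Lemma bob_dev (R : realType) (f : R -> R) (L : R) (muA : probability R R) (beta : R -> R) s v :
  equilibrium f L muA beta -> in_support muA s -> L <= s -> 0 <= v -> s < v ->
  muA [set` `]-oo, beta v]] = 0%E -> False.
Proof.
move=> [hB _] hs Ls v0 sv m0.
set e := (v - s) / 2.
have e0 : 0 < e by rewrite /e divr_gt0// subr_gt0.
have := hB v v0 (s + e).
rewrite /bob_payoff m0 /= mulr0 if_same.
have -> : L <= s + e by rewrite (le_trans Ls)// lerDl ltW.
have pos : 0 < fine (muA [set` `]-oo, (s + e)%R]]).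
  have h1 := hs e e0.
  have h2 : (muA [set` `](s - e)%R, (s + e)%R[] <= muA [set` `]-oo, (s + e)%R]])%E.
    apply: le_measure; rewrite ?inE//.
    by move=> y /=; rewrite !in_itv/= => /andP[_ /ltW ->].
  have h3 : (muA [set` `]-oo, (s + e)%R]] <= 1)%E by apply: probability_le1.
  apply: fine_gt0; rewrite (lt_le_trans h1 h2)/=.
  exact: (le_lt_trans h3 (ltry _)).
have ve : 0 < v - (s + e) by rewrite /e; lra.
by move=> /le_gtF; rewrite mulr_gt0.
Qed.

Local Notation mu := lebesgue_measure.

Lemma P0_meas {R : realType} : measurable [set x : R | 0 <= x].
Proof.
have -> : [set x : R | 0 <= x] = [set` `[0%R, +oo[] .
  by apply/seteqP; split => x /=; rewrite in_itv/= andbT.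
exact: measurable_itv.
Qed.

Lemma lt_meas {R : realType} (c : \bar R) : measurable [set v : R | (v%:E < c)%E].
Proof.
case: c => [r| |].
- have -> : [set v : R | (v%:E < r%:E)%E] = [set` `]-oo, r[].
    by apply/seteqP; split => x /=; rewrite in_itv/= lte_fin.
  exact: measurable_itv.
- have -> : [set v : R | (v%:E < +oo)%E] = setT.
    by apply/seteqP; split => x //= _; rewrite ltry.
  exact: measurableT.
- have -> : [set v : R | (v%:E < -oo)%E] = set0.
    by apply/seteqP; split => x //=; rewrite ltNge leNye.
  exact: measurable0.
Qed.

Lemma vd_meas {R : realType} (f : R -> R) : value_density f -> measurable_fun setT f.
Proof. by case=> -[]. Qed.

Lemma vd_ge0 {R : realType} (f : R -> R) : value_density f -> forall x, 0 <= f x.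
Proof. by case=> -[]. Qed.

Lemma f_int {R : realType} (f : R -> R) : value_density f ->
  mu.-integrable setT (fun x => (f x)%:E).
Proof.
move=> hf; have [[mf f0 f1 _] _] := hf.
apply/integrableP; split; first exact/measurable_EFinP.
under eq_integral do rewrite gee0_abs ?lee_fin//.
by move: f1; rewrite /Pv => ->; rewrite ltry.
Qed.

Lemma xf_int {R : realType} (f : R -> R) : value_density f ->
  mu.-integrable setT (fun x => (x * f x)%:E).
Proof. by case=> _ []. Qed.

Lemma hf_int {R : realType} (f : R -> R) (a b : R) : value_density f ->
  mu.-integrable setT (fun x => ((a * x + b) * f x)%:E).
Proof.
move=> hf.
have h1 := integrableZl measurableT a (xf_int _ hf).
have h2 := integrableZl measurableT b (f_int _ hf).
have := integrableD measurableT h1 h2.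
apply: eq_integrable => // x _ /=.
by rewrite -EFinM -EFinM -EFinD mulrDl mulrA.
Qed.

Lemma neg_int {R : realType} (f : R -> R) (A : set R) (h : R -> R) :
  value_density f -> measurable A -> measurable_fun setT h ->
  (\int[mu]_(x in A) (h x * f x)%:E =
   \int[mu]_(x in A `&` [set x | (0 <= x)%R]) (h x * f x)%:E)%E.
Proof.
move=> hf mA mh; have [[mf f0 _ fneg] _] := hf.
have ae0 : ae_eq mu [set` `]-oo, 0%R[] (fun x => (f x)%:E) (cst 0%E).
  apply/(ae_eq_integral_abs mu (measurable_itv _)).
    by apply/measurable_EFinP; exact: measurable_funS mf.
  under eq_integral do rewrite gee0_abs ?lee_fin//.
  exact: fneg.
have mg : measurable_fun setT (fun x => (h x * f x)%:E).
  by apply/measurable_EFinP; apply: measurable_funM.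
rewrite integral_mkcondr.
apply: ae_eq_integral => //.
- exact: measurable_funTS mg.
- have := (measurable_restrictT (fun x => (h x * f x)%:E) (P0_meas (R:=R))).1 (measurable_funTS mg).
  exact: measurable_funTS.
- apply: filterS ae0 => x H Ax; rewrite patchE.
  case: ifPn => //; rewrite notin_setE /= => /negP; rewrite -ltNge => x0.
  have := H; rewrite /= in_itv /= x0 => /(_ isT) [->].
  by rewrite mulr0.
Qed.

Definition monob (R : realType) (beta : R -> R) :=
  forall x y, 0 <= x -> x <= y -> beta x <= beta y.

Arguments monob {R}.

Lemma B2 {R : realType} (beta : R -> R) a x : 0 <= x ->
  (x%:E < bid_pinv beta a)%E -> beta x < a.
Proof.
move=> x0; rewrite ltNge; apply: contraNlt => ax.
by apply: ereal_inf_lbound; exists x.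
Qed.

Lemma B3 {R : realType} (beta : R -> R) a x : monob beta -> 0 <= x ->
  beta x < a -> (x%:E <= bid_pinv beta a)%E.
Proof.
move=> hb x0 bx; apply: le_ereal_inf_tmp => _ [y [y0 ay] <-]; rewrite lee_fin.
rewrite leNgt; apply/negP => yx.
have := hb _ _ y0 (ltW yx); lra.
Qed.

Lemma B4 {R : realType} (beta : R -> R) a y : 0 <= y -> a <= beta y ->
  (bid_pinv beta a <= y%:E)%E.
Proof. by move=> y0 ay; apply: ereal_inf_lbound; exists y. Qed.

Lemma pay_conv {R : realType} (f : R -> R) L (beta : R -> R) a :
  value_density f -> monob beta -> L < a ->
  alice_payoff f L beta a =
  (\int[mu]_(x in [set v | (v%:E < bid_pinv beta a)%E] `&` [set x | (0 <= x)%R])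
     ((x - a) * f x)%:E)%E.
Proof.
move=> hf hb La; rewrite /alice_payoff La.
set S := [set v | (0 <= v)%R /\ beta v < a].
set D := _ `&` _.
have mD : measurable D by apply: measurableI; [exact: lt_meas|exact: P0_meas].
have DS : D `<=` S by move=> x [/= xc x0]; split => //; exact: B2 _ _ _ x0 xc.
have SD1 : S `\` D `<=` [set fine (bid_pinv beta a)].
  move=> x [[x0 bx] nD] /=.
  have : ~ (x%:E < bid_pinv beta a)%E by move=> h; apply: nD.
  move/negP; rewrite -leNgt => h2.
  have h3 := B3 _ _ _ hb x0 bx.
  by have -> : bid_pinv beta a = x%:E by apply/eqP; rewrite eq_le h2 h3.
have mSD : measurable (S `\` D).
  by have [->|->] := subset_set1 SD1; [exact: measurable0|exact: measurable_set1].
have mg : measurable_fun setT (fun x : R => ((x - a) * f x)%:E).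
  apply/measurable_EFinP; apply: measurable_funM; last exact: vd_meas _ hf.
  exact: measurable_funB.
rewrite -(setDUK DS) integral_setU //.
- by rewrite (integral_Sset1 _ SD1) adde0.
- exact: measurable_funTS mg.
- by rewrite disj_set2E setDIK.
Qed.

Lemma intD_xf {R : realType} (f : R -> R) (D : set R) : value_density f -> measurable D ->
  mu.-integrable D (fun x => (x * f x)%:E).
Proof. move=> hf mD; exact: integrableS (xf_int _ hf). Qed.

Lemma intD_f {R : realType} (f : R -> R) (D : set R) : value_density f -> measurable D ->
  mu.-integrable D (fun x => (f x)%:E).
Proof. move=> hf mD; exact: integrableS (f_int _ hf). Qed.

Lemma Pi_form {R : realType} (f : R -> R) L (beta : R -> R) a :
  value_density f -> monob beta -> L < a ->
  alice_payoff f L beta a =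
  (fine (Ev f [set v | (v%:E < bid_pinv beta a)%E]) -
   a * fine (Pv f [set v | (v%:E < bid_pinv beta a)%E]))%:E.
Proof.
move=> hf hb La; rewrite pay_conv //.
set C := [set v | _].
have mC : measurable C by exact: lt_meas.
set D := C `&` _.
have mD : measurable D by apply: measurableI; [exact: mC|exact: P0_meas].
have -> : Ev f C = (\int[mu]_(x in D) (x * f x)%:E)%E.
  exact: (neg_int f C id hf mC).
have -> : Pv f C = (\int[mu]_(x in D) (f x)%:E)%E.
  rewrite /Pv; under eq_integral do rewrite -[f _]mul1r.
  rewrite (neg_int f C (fun=> 1) hf mC) //.
  by apply: eq_integral => x _; rewrite mul1r.
have i1 := intD_xf f D hf mD.
have i2 := intD_f f D hf mD.
have -> : (\int[mu]_(x in D) ((x - a) * f x)%:E =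
   \int[mu]_(x in D) ((x * f x)%:E - (a * f x)%:E))%E.
  by apply: eq_integral => x _; rewrite -EFinB mulrBl.
rewrite (@integralB_EFin _ _ _ mu D (fun x => x * f x) (fun x => a * f x) mD i1 (@integrableZl _ _ _ mu D mD a _ i2)).
rewrite (@integralZl _ _ _ mu D mD _ i2 a).
rewrite -(fineK (@integrable_fin_num _ _ _ mu D mD _ i1)) -(fineK (@integrable_fin_num _ _ _ mu D mD _ i2)).
by rewrite /= -EFinD.
Qed.

Lemma pay_witness {R : realType} (f : R -> R) L (beta : R -> R) a :
  value_density f -> monob beta -> L < a -> (0 < alice_payoff f L beta a)%E ->
  exists x, [/\ 0 <= x, beta x < a & a < x].
Proof.
move=> hf hb La; apply: contraPP => hno.
rewrite pay_conv //; apply/negP; rewrite -leNgt.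
set D := _ `&` _.
have hle : forall x, D x -> x <= a.
  move=> x [/= xc x0]; rewrite leNgt; apply/negP => ax; apply: hno.
  by exists x; split => //; exact: B2 _ _ _ x0 xc.
have -> : (\int[mu]_(x in D) ((x - a) * f x)%:E =
    \int[mu]_(x in D) - ((a - x) * f x)%:E)%E.
  by apply: eq_integral => x _; rewrite -EFinN -mulNr opprB.
rewrite integral_ge0N; last first.
  move=> x Dx; rewrite lee_fin mulr_ge0 ?(vd_ge0 _ hf)//.
  by rewrite subr_ge0 hle.
rewrite oppe_le0; apply: integral_ge0 => x Dx.
by rewrite lee_fin mulr_ge0 ?(vd_ge0 _ hf)// subr_ge0 hle.
Qed.

Lemma pay0_L {R : realType} (f : R -> R) L (beta : R -> R) x :
  x <= L -> alice_payoff f L beta x = 0%E.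
Proof. by move=> xL; rewrite /alice_payoff ltNge xL. Qed.

Lemma pay_le0 {R : realType} (f : R -> R) L (muA : probability R R) (beta : R -> R) a0 :
  value_density f -> monob beta -> equilibrium f L muA beta ->
  in_support muA a0 -> L < a0 -> alice_payoff f L beta a0 = 0%E.
Proof.
move=> hf hb heq hs La0.
have [hB hA] := heq.
have ge0 : (0 <= alice_payoff f L beta a0)%E.
  by rewrite -(pay0_L f L beta L (lexx L)); exact: hA a0 hs L.
apply/eqP; rewrite eq_le ge0 andbT leNgt; apply/negP => pos.
have NS : forall x, x <= L -> ~ in_support muA x.
  move=> x xL hx; have := hA x hx a0; rewrite (pay0_L f L beta x xL) => h.
  by have := lt_le_trans pos h; rewrite ltxx.
have mL : muA [set` `]-oo, L]] = 0%E.
  apply: null_of_not_support; first exact: measurable_itv.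
  by move=> x /=; rewrite in_itv /=; exact: NS.
pose Z := [set y : R | muA [set` `]-oo, y[] = 0%E].
have ZL : Z L.
  apply/eqP; rewrite /Z /= eq_le measure_ge0 andbT -mL.
  apply: le_measure; rewrite ?inE; try exact: measurable_itv.
  by move=> y /=; rewrite !in_itv /= => /ltW.
have ballZ : forall x y, Z y -> x < y -> ~ in_support muA x.
  move=> x y Zy xy hx.
  have yx0 : 0 < y - x by rewrite subr_gt0.
  have := hx (y - x) yx0.
  suff -> : muA [set` `](x - (y - x))%R, (x + (y - x))%R[] = 0%E by rewrite ltxx.
  apply/eqP; rewrite eq_le measure_ge0 andbT -Zy.
  apply: le_measure; rewrite ?inE; try exact: measurable_itv.
  by move=> z /=; rewrite !in_itv /= => /andP[_ h]; apply: (lt_le_trans h); lra.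
have hsZ : has_sup Z.
  split; first by exists L.
  apply: contrapT => nb.
  have : muA setT = 0%E.
    apply: null_of_not_support => // x _.
    have : ~ ubound Z x by move=> ub; apply: nb; exists x.
    move=> /existsNP[y /not_implyP[Zy /negP]]; rewrite -ltNge => xy.
    exact: ballZ x y Zy xy.
  by rewrite probability_setT => /(congr1 fine) /= /eqP; rewrite oner_eq0.
set s := sup Z.
have mS : muA [set` `]-oo, s[] = 0%E.
  apply: null_of_not_support; first exact: measurable_itv.
  move=> x /=; rewrite in_itv /= => xs.
  have sx0 : 0 < s - x by rewrite subr_gt0.
  have [z Zz hz] := sup_adherent sx0 hsZ.
  apply: (ballZ x z Zz); move: hz; rewrite /s; lra.
have sS : in_support muA s.
  move=> e e0; rewrite lt0e measure_ge0 andbT; apply/negP => /eqP be.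
  have nZ : ~ Z (s + e).
    move=> Zse; have := sup_upper_bound hsZ Zse; rewrite -/s; lra.
  apply: nZ; apply/eqP; rewrite /Z /= eq_le measure_ge0 andbT.
  apply: (le_trans (y := muA ([set` `]-oo, s[] `|` [set` `](s - e)%R, (s + e)%R[]))).
    apply: le_measure; rewrite ?inE; try exact: measurable_itv.
      by apply: measurableU; exact: measurable_itv.
    move=> y /=; rewrite !in_itv /= => ys.
    have [ys'|ys'] := ltP y s; [by left| right; apply/andP; split => //].
    rewrite ltrBlDr (le_lt_trans ys') // ltrDl //.
  apply: (le_trans (measureU2 _ _ _)); try exact: measurable_itv.
  rewrite [X in (X + _)%E](_ : _ = 0%E); last exact: mS.
  by rewrite [X in (_ + X)%E](_ : _ = 0%E) ?adde0; last exact: be.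
have Ls : L < s.
  have := sup_upper_bound hsZ ZL; rewrite -/s => Ls.
  rewrite lt_neqAle Ls andbT; apply/eqP => Lse.
  by apply: (NS s) => //; rewrite Lse.
have pos_s : (0 < alice_payoff f L beta s)%E.
  exact: lt_le_trans pos (hA s sS a0).
have [x [x0 bx sx]] := pay_witness f L beta s hf hb Ls pos_s.
apply: (bob_dev _ f L muA beta s x heq sS (ltW Ls) x0 sx).
apply/eqP; rewrite eq_le measure_ge0 andbT -mS.
apply: le_measure; rewrite ?inE; try exact: measurable_itv.
by move=> y /=; rewrite !in_itv /= => yb; exact: le_lt_trans yb bx.
Qed.


Lemma muA_fin {R : realType} (muA : probability R R) (A : set R) :
  measurable A -> muA A \is a fin_num.
Proof.
move=> mA; rewrite ge0_fin_numE ?measure_ge0//.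
exact: le_lt_trans (probability_le1 muA mA) (ltry _).
Qed.

Lemma Pv_fin {R : realType} (f : R -> R) (A : set R) :
  value_density f -> measurable A -> Pv f A \is a fin_num.
Proof.
move=> hf mA; exact: (@integrable_fin_num _ _ _ mu A mA _ (intD_f f A hf mA)).
Qed.

Lemma Pv_ge0 {R : realType} (f : R -> R) (A : set R) :
  value_density f -> (0 <= Pv f A)%E.
Proof. by move=> hf; apply: integral_ge0 => x _; rewrite lee_fin (vd_ge0 _ hf). Qed.

Lemma Pv_le1 {R : realType} (f : R -> R) (A : set R) :
  value_density f -> measurable A -> (Pv f A <= 1)%E.
Proof.
move=> hf mA; have [[mf f0 f1 _] _] := hf.
rewrite -f1; apply: ge0_subset_integral => //.
- by apply/measurable_EFinP.
- by move=> x _; rewrite lee_fin.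
Qed.

Lemma Pv_itv_pos {R : realType} (f : R -> R) (r : R) :
  value_density f -> 0 < r -> 0 < fine (Pv f [set` `]0%R, r[]).
Proof.
move=> hf r0; have [_ [hpos _]] := hf.
apply: fine_gt0; rewrite hpos //=.
exact: le_lt_trans (Pv_le1 f _ hf (measurable_itv _)) (ltry _).
Qed.

Lemma intD_g {R : realType} (f : R -> R) (D : set R) (a : R) : value_density f -> measurable D ->
  mu.-integrable D (fun x => ((x - a) * f x)%:E).
Proof.
move=> hf mD; apply: integrableS (_ : mu.-integrable setT _) => //.
apply: eq_integrable (hf_int f 1 (- a) hf) => // x _.
by rewrite mul1r.
Qed.

Lemma intD_cf {R : realType} (f : R -> R) (D : set R) (c : R) : value_density f -> measurable D ->
  mu.-integrable D (fun x => (c * f x)%:E).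
Proof.
move=> hf mD; apply: integrableS (_ : mu.-integrable setT _) => //.
apply: eq_integrable (hf_int f 0 c hf) => // x _.
by rewrite mul0r add0r.
Qed.

Lemma hard {R : realType} (f : R -> R) L (muA : probability R R) (beta : R -> R) a :
  value_density f -> monob beta -> 0 <= L -> equilibrium f L muA beta ->
  in_support muA a -> L < a -> (forall y, 0 < y -> a <= beta y) -> False.
Proof.
move=> hf hb L0 heq hs La hy.
have [hB hA] := heq.
have a0 : 0 < a by exact: le_lt_trans L0 La.
set v := a / 2.
have v0 : 0 < v by rewrite /v divr_gt0.
have va : v < a by rewrite /v; lra.
have hv := hy v v0.
have m0 : muA [set` `]-oo, beta v]] = 0%E.
  have := hB v (ltW v0) (L - 1).
  rewrite /bob_payoff.
  have -> : (L <= L - 1) = false by apply/negbTE; rewrite -ltNge; lra.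
  have -> : L <= beta v by apply: le_trans (ltW La) hv.
  move=> h.
  have Gfin := muA_fin muA [set` `]-oo, beta v]] (measurable_itv _).
  have G0 : 0 <= fine (muA [set` `]-oo, beta v]]) by apply: fine_ge0; exact: measure_ge0.
  have vb : v - beta v < 0 by lra.
  have : fine (muA [set` `]-oo, beta v]]) = 0 by nra.
  by move/eqP; rewrite fine_eq0 // => /eqP.
have bva : beta v <= a.
  rewrite leNgt; apply/negP => abv.
  have e0 : 0 < beta v - a by rewrite subr_gt0.
  have := hs _ e0.
  suff -> : muA [set` `](a - (beta v - a))%R, (a + (beta v - a))%R[] = 0%E by rewrite ltxx.
  apply/eqP; rewrite eq_le measure_ge0 andbT -m0.
  apply: le_measure; rewrite ?inE; try exact: measurable_itv.
  by move=> z /=; rewrite !in_itv /= => /andP[_ h]; apply: ltW; lra.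
have mA : muA [set` `]-oo, a]] = 0%E.
  apply/eqP; rewrite eq_le measure_ge0 andbT -m0.
  apply: le_measure; rewrite ?inE; try exact: measurable_itv.
  by move=> z /=; rewrite !in_itv /= => h; exact: le_trans h hv.
have hw : forall w, a < w -> a < beta w.
  move=> w aw; rewrite ltNge; apply/negP => bwa.
  apply: (bob_dev _ f L muA beta a w heq hs (ltW La) _ aw); first by lra.
  apply/eqP; rewrite eq_le measure_ge0 andbT -mA.
  apply: le_measure; rewrite ?inE; try exact: measurable_itv.
  by move=> z /=; rewrite !in_itv /= => h; exact: le_trans h bwa.
set p := fine (Pv f [set` `]0%R, v[]).
have p0 : 0 < p := Pv_itv_pos f v hf v0.
set d := v * p.
have d0 : 0 < d by rewrite /d mulr_gt0.
set v1 := a + d / 2.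
have av1 : a < v1 by rewrite /v1; lra.
have bv1 := hw v1 av1.
have [a' [a'1 a'2 hs']] : exists a', [/\ a < a', a' < beta v1 & in_support muA a'].
  apply: contrapT => nex.
  have m1 : muA [set` `]a, beta v1[] = 0%E.
    apply: null_of_not_support; first exact: measurable_itv.
    move=> x /=; rewrite in_itv /= => /andP[x1 x2] hx; apply: nex; exists x; split => //.
  have e0 : 0 < beta v1 - a by rewrite subr_gt0.
  have := hs _ e0; rewrite lt0e measure_ge0 andbT => /negP; apply.
  apply/eqP/le_anti; rewrite measure_ge0 andbT.
  apply: (le_trans (y := muA ([set` `]-oo, a]] `|` [set` `]a, beta v1[]))).
    apply: le_measure; rewrite ?inE; try exact: measurable_itv.
      by apply: measurableU; exact: measurable_itv.
    move=> y /=; rewrite !in_itv /= => /andP[_ ys].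
    have [ya|ya] := leP y a; [by left| right; apply/andP; split => //; lra].
  apply: (le_trans (measureU2 _ _ _)); try exact: measurable_itv.
  rewrite [X in (X + _)%E](_ : _ = 0%E); last exact: mA.
  by rewrite [X in (_ + X)%E](_ : _ = 0%E) ?adde0; last exact: m1.
have La' : L < a' by exact: lt_trans La a'1.
have pz := pay_le0 f L muA beta a' hf hb heq hs' La'.
rewrite (pay_conv f L beta a' hf hb La') in pz.
move: pz.
set C' := [set v0 | _].
have mC' : measurable C' by exact: lt_meas.
set D' := C' `&` _.
have mD' : measurable D' by apply: measurableI; [exact: mC'|exact: P0_meas].
have c'lo : ((v)%:E <= bid_pinv beta a')%E.
  apply: le_ereal_inf_tmp => _ [y [y0 ay] <-]; rewrite lee_fin leNgt; apply/negP => yv.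
  have := hb _ _ y0 (ltW yv); lra.
have c'hi : (bid_pinv beta a' <= v1%:E)%E.
  by apply: B4 => //; [lra | exact: ltW].
set I := [set` `]0%R, v[].
have mI : measurable I by exact: measurable_itv.
have ID : I `<=` D'.
  move=> x; rewrite /I /= in_itv /= => /andP[x0 xv]; split => /=; last exact: ltW.
  by apply: lt_le_trans c'lo; rewrite lte_fin.
have Dv1 : forall x, D' x -> x < v1.
  move=> x [/= xc _]; rewrite -lte_fin; exact: lt_le_trans xc c'hi.
have mDI : measurable (D' `\` I) by exact: measurableD.
rewrite -(setDUK ID) integral_setU //; last 2 first.
- by rewrite setDUK //; apply: measurable_funS (measurable_int _ (intD_g f D' a' hf mD')).
- by rewrite disj_set2E setDIK.
have b1 : (\int[mu]_(x in I) ((x - a') * f x)%:E <= ((- v) * p)%:E)%E.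
  have i1 := @le_integral _ _ _ mu I mI (fun x => ((x - a') * f x)%:E)
     (fun x => ((- v) * f x)%:E) (intD_g f I a' hf mI) (intD_cf f I (- v) hf mI).
  apply: le_trans (i1 _) _.
    move=> x; rewrite inE /I /= in_itv /= => /andP[x0 xv]; rewrite lee_fin.
    by apply: ler_wpM2r; [exact: (vd_ge0 _ hf)| rewrite /v in xv *; lra].
  have -> : (\int[mu]_(x in I) ((- v) * f x)%:E = (- v)%:E * Pv f I)%E.
    rewrite /Pv -(@integralZl _ _ _ mu I mI _ (intD_f f I hf mI)).
    by apply: eq_integral => x _; rewrite EFinM.
  by rewrite -(fineK (Pv_fin f I hf mI)) -EFinM.
have b2 : (\int[mu]_(x in D' `\` I) ((x - a') * f x)%:E <= (v1 - a)%:E)%E.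
  have i2 := @le_integral _ _ _ mu (D' `\` I) mDI (fun x => ((x - a') * f x)%:E)
     (fun x => ((v1 - a) * f x)%:E) (intD_g f _ a' hf mDI) (intD_cf f _ (v1 - a) hf mDI).
  apply: le_trans (i2 _) _.
    move=> x; rewrite inE => -[Dx _]; rewrite lee_fin.
    by apply: ler_wpM2r; [exact: (vd_ge0 _ hf)| have := Dv1 x Dx; lra].
  have -> : (\int[mu]_(x in D' `\` I) ((v1 - a) * f x)%:E = (v1 - a)%:E * Pv f (D' `\` I))%E.
    rewrite /Pv -(@integralZl _ _ _ mu _ mDI _ (intD_f f _ hf mDI)).
    by apply: eq_integral => x _; rewrite EFinM.
  rewrite -(fineK (Pv_fin f _ hf mDI)) -EFinM lee_fin.
  have := Pv_le1 f _ hf mDI; rewrite -(fineK (Pv_fin f _ hf mDI)) lee_fin => h1.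
  by rewrite -[leRHS]mulr1; apply: ler_wpM2l => //; lra.
move=> hz; have := leeD b1 b2; rewrite hz -EFinD lee_fin.
have -> : (- v) * p = - d by rewrite /d mulNr.
rewrite /v1; lra.
Qed.


Theorem lemma3 (R : realType) (f : R -> R) (L : R) (muA : probability R R)
    (beta : R -> R) :
  value_density f ->
  0 <= L ->
  (L%:E < Ev f setT)%E ->
  (forall x y, 0 <= x -> x <= y -> beta x <= beta y) ->
  equilibrium f L muA beta ->
  forall bA, in_support muA bA -> L < bA ->
    bA = cond_mean f [set v | (v%:E < bid_pinv beta bA)%E].
Proof.
move=> hf L0 hE hb heq bA hs LbA.
have hb' : monob beta := hb.
have pz := pay_le0 f L muA beta bA hf hb' heq hs LbA.
rewrite (Pi_form f L beta bA hf hb' LbA) in pz.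
set C := [set v | _] in pz *.
have mC : measurable C by exact: lt_meas.
have hP : 0 < fine (Pv f C).
  have [c0|c0] := ltP 0%E (bid_pinv beta bA).
    have [r [r0 rc]] : exists r, 0 < r /\ (r%:E <= bid_pinv beta bA)%E.
      move: c0; case: (bid_pinv beta bA) => [r'| |] c0.
      - by exists r'; split; rewrite // -lte_fin.
      - by exists 1; split; rewrite ?ltr01 ?leey.
      - by move: c0; rewrite ltNge leNye.
    apply: (lt_le_trans (Pv_itv_pos f r hf r0)).
    apply: fine_le; [exact: Pv_fin | exact: Pv_fin |].
    apply: ge0_subset_integral.
    all: try exact: measurable_itv.
    - exact: mC.
    - by apply: measurable_funTS; apply/measurable_EFinP; exact: vd_meas _ hf.
    - by move=> x _; rewrite lee_fin (vd_ge0 _ hf).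
    - move=> x /=; rewrite in_itv /= => /andP[_ xr].
      by apply: lt_le_trans rc; rewrite lte_fin.
  exfalso; apply: (hard f L muA beta bA hf hb' L0 heq hs LbA) => y y0.
  have : (bid_pinv beta bA < y%:E)%E by apply: le_lt_trans c0 _; rewrite lte_fin.
  move=> /ereal_inf_lt [_ [z [z0 bz] <-]]; rewrite lte_fin => zy.
  exact: le_trans bz (hb z y z0 (ltW zy)).
move: pz => /(congr1 fine) /= /eqP; rewrite subr_eq0 => /eqP hEv.
by rewrite /cond_mean hEv mulfK // gt_eqF.
Qed.
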